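(* For every corelation $R\in\mathbf{FinCorel}^\circ(m,n)$ there exists a morphism $f\in\mathsf{Syn}(\delta)(m,n)$ with $\Pi(f)=R$.
   Context: Write $\underline{m}=\{1,\dots,m\}$. $\mathsf{Syn}(\delta)$ is the free PROP (strict symmetric monoidal category with objects $\mathbb{N}$) on one generator $\delta:1\to2$, modelled graphically: a morphism $f:m\to n$ is an isomorphism class of finite directed acyclic graphs $G(f)$ with $m$ linearly ordered input half-edges, $n$ linearly ordered output half-edges, and finitely many internal vertices, each with exactly one incoming half-edge and an ordered pair of outgoing half-edges; composition glues outputs to inputs, tensor is disjoint union, symmetries are wire crossings (not vertices). $\Pi(f)$ (the ancestry partition) is the equivalence relation on $\underline{m}\sqcup\underline{n}$ in which $x\sim y$ iff the pendant vertices labelled $x,y$ lie in the same connected component of the underlying undirected graph of $G(f)$, with inputs attached as pendant vertices labelled by $\underline{m}$ and outputs as pendant vertices labelled by $\underline{n}$. $\mathbf{FinCorel}^\circ(m,n)$ is the set of equivalence relations $R$ on $\underline{m}\sqcup\underline{n}$ such that (a) each class contains exactly one element of $\underline{m}$ and (b) each class contains at least one element of $\underline{n}$. *)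

(* Defs.v *)
From mathcomp Require Import all_boot.
Set Implicit Arguments. Unset Strict Implicit. Unset Printing Implicit Defensive.

(* A representative of a morphism m -> n of Syn(delta): a finite DAG with
   [nv] internal vertices, each having one incoming half-edge and an ordered
   pair (indexed by bool: false = first, true = second) of outgoing half-edges.
   Wire "sources" are the m input half-edges and the 2*nv vertex outputs;
   wire "targets" are the nv vertex inputs and the n output half-edges.
   [wire] glues every source to exactly one target (a bijection). *)
Definition wsrc (m nv : nat) := ('I_m + ('I_nv * bool))%type.
Definition wtgt (n nv : nat) := ('I_nv + 'I_n)%type.

Definition vedge (m n nv : nat) (w : wsrc m nv -> wtgt n nv) : rel 'I_nv :=
  fun u v => [exists b : bool, w (inr (u, b)) == inl v].

Record syn_graph (m n : nat) := SynGraph {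
  nv : nat;
  wire : wsrc m nv -> wtgt n nv;
  wire_bij : bijective wire;
  wire_acyclic : forall u v : 'I_nv, vedge wire u v -> ~~ connect (vedge wire) v u
}.

(* Nodes of the underlying undirected graph: pendant input vertices,
   pendant output vertices, internal vertices. *)
Definition node (m n nv : nat) := ('I_m + 'I_n + 'I_nv)%type.

Definition src_node (m n nv : nat) (s : wsrc m nv) : node m n nv :=
  match s with inl i => inl (inl i) | inr (u, _) => inr u end.
Definition tgt_node (m n nv : nat) (t : wtgt n nv) : node m n nv :=
  match t with inl v => inr v | inr j => inl (inr j) end.

Definition adj0 (m n : nat) (f : syn_graph m n) : rel (node m n (nv f)) :=
  fun x y => [exists s : wsrc m (nv f),
    (@src_node m n (nv f) s == x) && (@tgt_node m n (nv f) (@wire m n f s) == y)].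
Definition adj (m n : nat) (f : syn_graph m n) : rel (node m n (nv f)) :=
  fun x y => @adj0 m n f x y || @adj0 m n f y x.

Definition pend (m n nv : nat) (x : 'I_m + 'I_n) : node m n nv :=
  match x with inl i => inl (inl i) | inr j => inl (inr j) end.

Definition ancestry (m n : nat) (f : syn_graph m n) : rel ('I_m + 'I_n) :=
  fun x y => connect (@adj m n f) (@pend m n (nv f) x) (@pend m n (nv f) y).

Definition fincorel_circ (m n : nat) (R : rel ('I_m + 'I_n)) : Prop :=
  [/\ reflexive R, symmetric R, transitive R,
      (forall x, exists i : 'I_m, R x (inl i) /\ forall i', R x (inl i') -> i' = i)
    & (forall x, exists j : 'I_n, R x (inr j))].

(* Main.v *)
Require Import Defs.
From mathcomp Require Import all_boot zify.
Set Implicit Arguments. Unset Strict Implicit. Unset Printing Implicit Defensive.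

Lemma connect_mono (T : finType) (e : rel T) (f : T -> nat) :
  (forall x y, e x y -> f x < f y) -> forall x y, connect e x y -> f x <= f y.
Proof.
move=> H x y /connectP [p pth ->]; elim: p x pth => //= z p IH x /andP[exz pz].
exact: leq_trans (ltnW (H _ _ exz)) (IH _ pz).
Qed.

Lemma connect_inv (T : finType) (U : Type) (e : rel T) (f : T -> U) :
  (forall x y, e x y -> f x = f y) -> forall x y, connect e x y -> f x = f y.
Proof.
move=> H x y /connectP [p pth ->]; elim: p x pth => //= z p IH x /andP[exz pz].
by rewrite (H _ _ exz) (IH _ pz).
Qed.

Section Build.
Variables (m n : nat) (cls : 'I_n -> 'I_m) (fo : 'I_m -> 'I_n) (nxt : 'I_n -> option 'I_n).
Hypothesis fo_cls : forall i, cls (fo i) = i.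
Hypothesis fo_min : forall i l, cls l = i -> fo i <= l.
Hypothesis nxt_some : forall j k, nxt j = Some k ->
  [/\ cls k = cls j, j < k & forall l, cls l = cls j -> j < l -> k <= l].
Hypothesis nxt_none : forall j, nxt j = None -> forall l, cls l = cls j -> l <= j.

Definition nf (j : 'I_n) := j != fo (cls j).
Local Notation V := {j : 'I_n | nf j}.
Definition nV := #|{: V}|.
Definition vt (u : 'I_nV) : 'I_n := val (enum_val u).
Definition tgt_of (k : 'I_n) : wtgt n nV :=
  match (insub k : option V) with Some x => inl (enum_rank x) | None => inr k end.
Definition wr (s : wsrc m nV) : wtgt n nV := match s with
 | inl i => match nxt (fo i) with Some k => tgt_of k | None => inr (fo i) end
 | inr (u, false) => inr (vt u)
 | inr (u, true) => match nxt (vt u) with Some k => tgt_of k | None => inr (fo (cls (vt u))) end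
 end.

Lemma vt_inj : injective vt.
Proof. by move=> u v /val_inj /enum_val_inj. Qed.
Lemma vt_nf u : nf (vt u).
Proof. exact: valP. Qed.
Lemma tgt_of_nf k : nf k -> exists v, tgt_of k = inl v /\ vt v = k.
Proof.
rewrite /tgt_of => H; case: insubP => [x _ <-|]; last by rewrite H.
by exists (enum_rank x); rewrite /vt enum_rankK.
Qed.
Lemma tgt_of_f k : ~~ nf k -> tgt_of k = inr k.
Proof. by rewrite /tgt_of => H; case: insubP => // x; rewrite (negbTE H). Qed.
Lemma tgt_of_vt v : tgt_of (vt v) = inl v.
Proof.
have [w [-> /vt_inj ->]] := tgt_of_nf (vt_nf v); done.
Qed.
Lemma tgt_of_inj : injective tgt_of.
Proof.
move=> a b; case: (boolP (nf a)) => [/tgt_of_nf [v [-> <-]]|/tgt_of_f ->];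
case: (boolP (nf b)) => [/tgt_of_nf [w [-> <-]]|/tgt_of_f ->] //.
- by case=> ->.
- by case.
Qed.
Lemma nxt_nf j k : nxt j = Some k -> nf k.
Proof.
case/nxt_some => ck jk _.
rewrite /nf ck.
apply/negP => /eqP E.
have H := fo_min (erefl (cls j)).
rewrite -E in H.
have := leq_trans jk H.
by rewrite ltnn.
Qed.
Lemma nxt_inj j1 j2 k : nxt j1 = Some k -> nxt j2 = Some k -> j1 = j2.
Proof.
move=> E1 E2; case: (nxt_some E1) => c1 l1 m1; case: (nxt_some E2) => c2 l2 m2.
apply/val_inj; case: (ltngtP j1 j2) => // lt.
- have := m1 _ (etrans (esym c2) c1) lt => H. by move: (leq_trans l2 H); rewrite ltnn.
- have := m2 _ (etrans (esym c1) c2) lt => H. by move: (leq_trans l1 H); rewrite ltnn.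
Qed.
Lemma nxt_none_eq a b : nxt a = None -> nxt b = None -> cls a = cls b -> a = b.
Proof.
move=> Ha Hb c; apply/val_inj/eqP; rewrite eqn_leq.
by rewrite (nxt_none Hb c) (nxt_none Ha (esym c)).
Qed.
Lemma nf_fo i : ~~ nf (fo i).
Proof. by rewrite /nf fo_cls eqxx. Qed.

Lemma wr_inj : injective wr.
Proof.
have fo_inj : injective fo by move=> a b E; rewrite -(fo_cls a) E fo_cls.
have nfv := vt_nf.
move=> [i1|[v1 [|]]] [i2|[v2 [|]]] /=.
- case E1: (nxt (fo i1)) => [k1|]; case E2: (nxt (fo i2)) => [k2|].
  + move/tgt_of_inj=> ek; subst k2. by rewrite (fo_inj _ _ (nxt_inj E1 E2)).
  + have [v [-> _]] := tgt_of_nf (nxt_nf E1); done.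
  + have [v [-> _]] := tgt_of_nf (nxt_nf E2); done.
  + by case=> /fo_inj ->.
- case E1: (nxt (fo i1)) => [k1|]; case E2: (nxt (vt v2)) => [k2|].
  + move/tgt_of_inj=> ek; subst k2. move: (nfv v2); by rewrite -(nxt_inj E1 E2) (negbTE (nf_fo _)).
  + have [v [-> _]] := tgt_of_nf (nxt_nf E1); done.
  + have [v [-> _]] := tgt_of_nf (nxt_nf E2); done.
  + case=> E; have ci : i1 = cls (vt v2) by rewrite -(fo_cls i1) E fo_cls.
    move: (nfv v2); rewrite (@nxt_none_eq (vt v2) (fo i1)) ?(negbTE (nf_fo _)) //.
    by rewrite fo_cls.
- case E1: (nxt (fo i1)) => [k1|].
    have [v [-> _]] := tgt_of_nf (nxt_nf E1); done.
  case=> E; move: (nfv v2); by rewrite -E (negbTE (nf_fo _)).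
- case E1: (nxt (vt v1)) => [k1|]; case E2: (nxt (fo i2)) => [k2|].
  + move/tgt_of_inj=> ek; subst k2. move: (nfv v1); by rewrite (nxt_inj E1 E2) (negbTE (nf_fo _)).
  + have [v [-> _]] := tgt_of_nf (nxt_nf E1); done.
  + have [v [-> _]] := tgt_of_nf (nxt_nf E2); done.
  + case=> E; have ci : i2 = cls (vt v1) by rewrite -(fo_cls i2) -E fo_cls.
    move: (nfv v1); rewrite (@nxt_none_eq (vt v1) (fo i2)) ?(negbTE (nf_fo _)) //.
    by rewrite fo_cls.
- case E1: (nxt (vt v1)) => [k1|]; case E2: (nxt (vt v2)) => [k2|].
  + move/tgt_of_inj=> ek; subst k2. by rewrite (vt_inj (nxt_inj E1 E2)).
  + have [v [-> _]] := tgt_of_nf (nxt_nf E1); done.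
  + have [v [-> _]] := tgt_of_nf (nxt_nf E2); done.
  + case=> E. have c : cls (vt v1) = cls (vt v2) by rewrite -(fo_cls (cls (vt v1))) E fo_cls.
    by rewrite (vt_inj (nxt_none_eq E1 E2 c)).
- case E1: (nxt (vt v1)) => [k1|].
  + have [v [-> _]] := tgt_of_nf (nxt_nf E1); done.
  + case=> E; move: (nfv v2); by rewrite -E (negbTE (nf_fo _)).
- case E2: (nxt (fo i2)) => [k2|].
    have [v [-> _]] := tgt_of_nf (nxt_nf E2); done.
  case=> E; move: (nfv v1); by rewrite E (negbTE (nf_fo _)).
- case E2: (nxt (vt v2)) => [k2|].
  + have [v [-> _]] := tgt_of_nf (nxt_nf E2); done.
  + case=> E; move: (nfv v1); by rewrite E (negbTE (nf_fo _)).
- by case=> /vt_inj ->.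
Qed.


Lemma card_ok : #|{: wtgt n nV}| <= #|{: wsrc m nV}|.
Proof.
rewrite /wtgt /wsrc !card_sum card_prod card_bool !card_ord.
have h1 : nV = #|[pred j | nf j]| by rewrite /nV card_sig.
have h2 := cardC [pred j | nf j]; rewrite card_ord in h2.
rewrite -h1 in h2.
have h3 : n <= m + nV.
  rewrite -{1}h2 addnC leq_add2r.
  apply: leq_trans (_ : #|codom fo| <= m).
    apply: subset_leq_card; apply/subsetP => j; rewrite !inE /nf negbK => /eqP ->.
    exact: codom_f.
  by apply: leq_trans (leq_image_card _ _) _; rewrite card_ord.
lia.
Qed.

Lemma wr_bij : bijective wr.
Proof. exact: inj_card_bij wr_inj card_ok. Qed.

Lemma vedge_lt u v : vedge wr u v -> vt u < vt v.
Proof.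
case/existsP => -[] /=; last by [].
case E: (nxt (vt u)) => [k|] //.
have [w [-> hw]] := tgt_of_nf (nxt_nf E).
move=> /eqP [<-]. rewrite hw. by case: (nxt_some E).
Qed.

Lemma wr_acyc : forall u v : 'I_nV, vedge wr u v -> ~~ connect (vedge wr) v u.
Proof.
move=> u v e; apply/negP => c.
have := connect_mono (f := fun x => nat_of_ord (vt x)) vedge_lt c.
move: (vedge_lt e) => H1 H2. by move: (leq_trans H1 H2); rewrite ltnn.
Qed.

Definition G : syn_graph m n := @SynGraph m n nV wr wr_bij wr_acyc.

Local Notation tn := (@tgt_node m n nV).
Local Notation sn := (@src_node m n nV).

Definition lab (x : node m n nV) : 'I_m :=
  match x with inl (inl i) => i | inl (inr j) => cls j | inr u => cls (vt u) end.

Lemma lab_tgt_of k : lab (tn (tgt_of k)) = cls k.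
Proof.
case: (boolP (nf k)) => [/tgt_of_nf [v [-> <-]]|/tgt_of_f ->] //.
Qed.

Lemma lab_wire s : lab (sn s) = lab (tn (wr s)).
Proof.
case: s => [i|[u [|]]] /=.
- case E: (nxt (fo i)) => [k|] /=; last by rewrite fo_cls.
  by rewrite lab_tgt_of; case: (nxt_some E) => -> _ _; rewrite fo_cls.
- case E: (nxt (vt u)) => [k|] /=; last by rewrite fo_cls.
  by rewrite lab_tgt_of; case: (nxt_some E) => -> _ _.
- by [].
Qed.

Lemma adj_lab x y : @adj m n G x y -> lab x = lab y.
Proof.
case/orP => /existsP [s /andP [/eqP <- /eqP <-]]; rewrite lab_wire //.
Qed.

Local Notation ad := (@adj m n G).

Lemma ad_sym : symmetric ad.
Proof. by move=> x y; rewrite /adj orbC. Qed.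

Lemma ad_wire s : connect ad (sn s) (tn (wr s)).
Proof.
apply: connect1; apply/orP; left; apply/existsP; exists s; rewrite /= !eqxx //.
Qed.

Lemma ad_wire' s : connect ad (tn (wr s)) (sn s).
Proof. by rewrite (sym_connect_sym ad_sym); apply: ad_wire. Qed.

Lemma pred_ex d (p k : 'I_n) : k - p <= d -> cls p = cls k -> p < k ->
  exists q : 'I_n, [/\ cls q = cls k, p <= q & nxt q = Some k].
Proof.
elim: d p => [|d IH] p hd hc hp; first by lia.
case E: (nxt p) => [k'|].
- case: (nxt_some E) => c1 l1 m1.
  have hk' : k' <= k by apply: m1 => //.
  case: (ltngtP k' k) => [lt||eq].
  + have [q [q1 q2 q3]] := IH k' ltac:(lia) (etrans c1 hc) lt.
    exists q; split => //; lia.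
  + lia.
  + by exists p; split => //; rewrite E; congr Some; apply/val_inj.
- have := nxt_none E (esym hc). lia.
Qed.

Lemma last_ex d (j : 'I_n) : n - j <= d ->
  exists l : 'I_n, [/\ cls l = cls j, j <= l & nxt l = None].
Proof.
elim: d j => [|d IH] j hd.
  have := ltn_ord j; lia.
case E: (nxt j) => [k|]; last by exists j.
case: (nxt_some E) => c1 l1 _.
have [l [q1 q2 q3]] := IH k ltac:(lia).
exists l; split => //; [congruence | lia].
Qed.

Lemma vert_conn d (v : 'I_nV) : vt v <= d -> connect ad (inr v) (inl (inl (cls (vt v)))).
Proof.
elim: d v => [|d IH] v hv.
- have := fo_min (erefl (cls (vt v))).
  have := vt_nf v; rewrite /nf => ne. move=> le.
  have : fo (cls (vt v)) < vt v by rewrite ltn_neqAle le andbT eq_sym.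
  lia.
- have le := fo_min (erefl (cls (vt v))).
  have := vt_nf v; rewrite /nf => ne.
  have lt : fo (cls (vt v)) < vt v by rewrite ltn_neqAle le andbT eq_sym.
  have [q [q1 q2 q3]] := pred_ex (leq_subr _ _) (fo_cls _) lt.
  case: (boolP (nf q)) => [/tgt_of_nf [w [hw1 hw2]]|].
  + have := ad_wire' (inr (w, true)); rewrite /= hw2 q3 tgt_of_vt /= => c1.
    apply: connect_trans c1 _.
    have hc : cls (vt w) = cls (vt v) by rewrite hw2.
    rewrite -hc; apply: IH.
    have := nxt_some q3; case=> _ h _. rewrite hw2; lia.
  + rewrite /nf negbK => /eqP hq.
    have := ad_wire' (inl (cls (vt v))); rewrite /= -q1 -hq q3 tgt_of_vt /=.
    by rewrite q1.
Qed.

Lemma out_conn (j : 'I_n) : connect ad (inl (inr j)) (inl (inl (cls j))).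
Proof.
case: (boolP (nf j)) => [/tgt_of_nf [w [hw1 hw2]]|].
- have := ad_wire' (inr (w, false)); rewrite /= hw2 => c1.
  apply: connect_trans c1 _.
  rewrite -hw2; exact: (vert_conn (leqnn _)).
- rewrite /nf negbK => /eqP hj.
  have [l [l1 l2 l3]] := @last_ex n j (leq_subr _ _).
  case: (boolP (nf l)) => [/tgt_of_nf [w [hw1 hw2]]|].
  + have := ad_wire' (inr (w, true)); rewrite /= hw2 l3 l1 -hj => c1.
    apply: connect_trans c1 _.
    rewrite -l1 -hw2; exact: (vert_conn (leqnn _)).
  + rewrite /nf negbK => /eqP hl.
    have hlj : l = j by rewrite hl l1 -hj.
    have := ad_wire' (inl (cls j)); rewrite /= -hj -hlj l3 /=.
    by [].
Qed.

Definition labp (x : 'I_m + 'I_n) : 'I_m := match x with inl i => i | inr j => cls j end.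

Lemma ancestry_G x y : ancestry G x y = (labp x == labp y).
Proof.
have hp : forall z, connect ad (pend nV z) (inl (inl (labp z))).
  by case=> [i|j] /=; [exact: connect0 | exact: out_conn].
apply/idP/eqP.
- move=> c; have := connect_inv adj_lab c. by case: x {c} => [?|?]; case: y => [?|?].
- move=> e; rewrite /ancestry; apply: connect_trans (hp x) _.
  by rewrite e (sym_connect_sym ad_sym).
Qed.
End Build.

Theorem proposition2p13 (m n : nat) (R : rel ('I_m + 'I_n)) :
  fincorel_circ R -> exists f : syn_graph m n, ancestry f =2 R.
Proof.
case=> Rr Rs Rt H4 H5.
have /fin_all_exists [cin hcin] := H4.
have Rsym : forall x y, R x y -> R y x by move=> x y; rewrite Rs.
have Req : forall x y, R x y = (cin x == cin y).
  move=> x y; apply/idP/eqP.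
  - move=> rxy; have ry : R y (inl (cin x)) := Rt _ _ _ (Rsym _ _ rxy) (hcin x).1.
    exact: (hcin y).2 _ ry.
  - move=> e; apply: Rt (hcin x).1 _; rewrite e; exact: Rsym (hcin y).1.
have cin_inl : forall i, cin (inl i) = i.
  by move=> i; apply/esym/(hcin (inl i)).2/Rr.
pose cls (j : 'I_n) := cin (inr j).
have /fin_all_exists [fo hfo] : forall i : 'I_m, exists j : 'I_n,
    cls j = i /\ forall l, cls l = i -> j <= l.
  move=> i; have [j0 r0] := H5 (inl i).
  have c0 : cls j0 = i by apply/eqP; rewrite /cls -{1}(cin_inl i) -Req Rs.
  case: (@arg_minnP _ j0 (fun j => cls j == i) (fun j => val j)); first by apply/eqP.
  move=> j /eqP cj mj; exists j; split => // l cl; apply: mj; exact/eqP.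
have /fin_all_exists [nxt hnxt] : forall j : 'I_n, exists o : option 'I_n,
    match o with
    | Some k => [/\ cls k = cls j, j < k & forall l, cls l = cls j -> j < l -> k <= l]
    | None => forall l, cls l = cls j -> l <= j end.
  move=> j; case: (boolP [exists l, (cls l == cls j) && (j < l)]).
  - case/existsP => l0 hl0.
    case: (@arg_minnP _ l0 (fun l => (cls l == cls j) && (j < l)) (fun l => val l)) => //.
    move=> k /andP [/eqP ck jk] mk; exists (Some k); split => // l cl jl.
    by apply: mk; rewrite cl eqxx jl.
  - move=> hn; exists None => l cl; rewrite leqNgt; apply/negP => jl.
    by move/existsP: hn; apply; exists l; rewrite cl eqxx jl.
have fo_cls : forall i, cls (fo i) = i by move=> i; case: (hfo i).
have fo_min : forall i l, cls l = i -> fo i <= l by move=> i; case: (hfo i).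
have nxt_some : forall j k, nxt j = Some k ->
  [/\ cls k = cls j, j < k & forall l, cls l = cls j -> j < l -> k <= l].
  by move=> j k E; have := hnxt j; rewrite E.
have nxt_none : forall j, nxt j = None -> forall l, cls l = cls j -> l <= j.
  by move=> j E; have := hnxt j; rewrite E.
exists (G fo_cls fo_min nxt_some nxt_none) => x y.
rewrite ancestry_G Req.
by case: x => [i|j]; case: y => [i'|j'] //=; rewrite ?cin_inl.
Qed.
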